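(* Define $\mathrm{Mex}(F)=\min(\mathbb{N}_0\setminus F)$ for $F\subseteq\mathbb{N}_0$, and $a+D=\{a+d:d\in D\}$. Define triples $v(n)=(v_1(n),v_2(n),v_3(n))$, $n\ge 0$, recursively by $v(0)=(0,0,0)$ and, for $n\ge 0$, with $F_n=\{v_i(k): 0\le k\le n,\ i\in\{1,2,3\}\}$ and $D_n=\bigcup_{k=0}^{n}\{v_2(k)-v_1(k),\,v_3(k)-v_2(k),\,v_3(k)-v_1(k)\}$, \[ v_1(n+1)=\mathrm{Mex}(F_n),\quad v_2(n+1)=\mathrm{Mex}\big((v_1(n+1)+D_n)\cup\{1,\dots,v_1(n+1)\}\cup F_n\big), \] \[ v_3(n+1)=\mathrm{Mex}\big((v_2(n+1)+D_n)\cup\{1,\dots,v_2(n+1)\}\cup F_n\big). \] Then the three sets $\{v_1(n): n\in\mathbb{N}\}$, $\{v_2(n): n\in\mathbb{N}\}$, $\{v_3(n): n\in\mathbb{N}\}$ are pairwise disjoint and their union is $\mathbb{N}=\{1,2,3,\dots\}$ (i.e., they form a partition of $\mathbb{N}$).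
   Context: $\mathbb{N}_0$ denotes the nonnegative integers and $\mathbb{N}=\mathbb{N}_0\setminus\{0\}$. These triples are the P-positions (sorted) of the 3D Wythoff $L^1$-Nim game. *)

(* Defs.v *)
From mathcomp Require Import all_boot.
Set Implicit Arguments. Unset Strict Implicit. Unset Printing Implicit Defensive.

(* Among 0..size F at least one value is missing, so searching iota 0 (size F).+1
   finds the least missing n; [find] returns its index, which equals n. *)
Definition mex (F : seq nat) : nat :=
  find (fun n => n \notin F) (iota 0 (size F).+1).

Definition triple := (nat * nat * nat)%type.
Definition t1 (t : triple) : nat := t.1.1.
Definition t2 (t : triple) : nat := t.1.2.
Definition t3 (t : triple) : nat := t.2.

Definition Fset (h : seq triple) : seq nat :=
  flatten [seq [:: t1 t; t2 t; t3 t] | t <- h].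
(* D_n from the history (differences are nonnegative since v1 < v2 < v3) *)
Definition Dset (h : seq triple) : seq nat :=
  flatten [seq [:: t2 t - t1 t; t3 t - t2 t; t3 t - t1 t] | t <- h].

Definition shift (a : nat) (D : seq nat) : seq nat := [seq a + d | d <- D].

(* v(n+1) computed from the history [:: v 0; ...; v n] *)
Definition step (h : seq triple) : triple :=
  let F := Fset h in
  let D := Dset h in
  let a1 := mex F in
  let a2 := mex (shift a1 D ++ iota 1 a1 ++ F) in
  let a3 := mex (shift a2 D ++ iota 1 a2 ++ F) in
  (a1, a2, a3).

Fixpoint hist (n : nat) : seq triple :=
  match n with
  | 0 => [:: (0, 0, 0)]
  | n'.+1 => let h := hist n' in rcons h (step h)
  end.

Definition v (n : nat) : triple := nth (0, 0, 0) (hist n) n.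
Definition v1 n := t1 (v n).
Definition v2 n := t2 (v n).
Definition v3 n := t3 (v n).

(* Main.v *)
Require Import Defs.
From mathcomp Require Import all_boot.

Lemma size_hist n : size (hist n) = n.+1.
Proof. by elim: n => //= n IH; rewrite size_rcons IH. Qed.

Lemma vS n : v n.+1 = step (hist n).
Proof. by rewrite /v /= nth_rcons size_hist ltnn eqxx. Qed.

Lemma hist_map n : hist n = map v (iota 0 n.+1).
Proof.
elim: n => [//|n IH].
rewrite (_ : hist n.+1 = rcons (hist n) (step (hist n))) //.
by rewrite -[n.+2]addn1 iotaD map_cat -IH /= -vS cats1.
Qed.

Lemma v0 : v 0 = (0,0,0).
Proof. by []. Qed.

Lemma FsetP y n :
  reflect (exists2 k, k <= n & y \in [:: v1 k; v2 k; v3 k]) (y \in Fset (hist n)).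
Proof.
apply: (iffP flatten_mapP).
  move=> [t]; rewrite hist_map => /mapP [k]; rewrite mem_iota /= => Hk -> Hy.
  by exists k.
move=> [k Hk Hy]; exists (v k) => //.
by rewrite hist_map; apply: map_f; rewrite mem_iota.
Qed.

Lemma mex_notin F : mex F \notin F.
Proof.
have Hh : has (fun n => n \notin F) (iota 0 (size F).+1).
  apply/negPn/negP => /hasPn H.
  have : size (iota 0 (size F).+1) <= size F.
    apply: uniq_leq_size; first exact: iota_uniq.
    by move=> y /H; rewrite negbK.
  by rewrite size_iota ltnn.
have := nth_find 0 Hh.
have Hf := Hh; rewrite has_find size_iota in Hf.
by rewrite nth_iota ?add0n.
Qed.

Lemma mex_le F y : y \notin F -> mex F <= y.
Proof.
move=> Hy; rewrite leqNgt; apply/negP => lt.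
have := before_find 0 lt.
have Hs : y < (size F).+1.
  apply: leq_trans lt _.
  by have := find_size (fun n => n \notin F) (iota 0 (size F).+1); rewrite size_iota.
by rewrite nth_iota ?add0n // Hy.
Qed.

Lemma zeroF n : 0 \in Fset (hist n).
Proof. by apply/FsetP; exists 0. Qed.

Lemma newv m :
  [/\ v1 m.+1 \notin Fset (hist m), v2 m.+1 \notin Fset (hist m),
      v3 m.+1 \notin Fset (hist m),
      0 < v1 m.+1 & v1 m.+1 < v2 m.+1 /\ v2 m.+1 < v3 m.+1].
Proof.
rewrite /v1 /v2 /v3 vS /step /t1 /t2 /t3 /=.
set F := Fset (hist m).
have F0 : 0 \in F by apply: zeroF.
set a1 := mex F.
set a2 := mex _.
set a3 := mex (shift a2 _ ++ _ ++ _).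
have H1 : a1 \notin F := mex_notin F.
have H2 := mex_notin (shift a1 (Dset (hist m)) ++ iota 1 a1 ++ F).
have H3 := mex_notin (shift a2 (Dset (hist m)) ++ iota 1 a2 ++ F).
rewrite -/a2 !mem_cat !negb_or mem_iota in H2.
rewrite -/a3 !mem_cat !negb_or mem_iota in H3.
case/and3P: H2 => _ H2a H2b.
case/and3P: H3 => _ H3a H3b.
have p1 : 0 < a1 by rewrite lt0n; apply/eqP => E; move: H1; rewrite E F0.
have p2 : 0 < a2 by rewrite lt0n; apply/eqP => E; move: H2b; rewrite E F0.
have p3 : 0 < a3 by rewrite lt0n; apply/eqP => E; move: H3b; rewrite E F0.
rewrite H1 H2b H3b p1; do 2 split=> //.
  by move: H2a; rewrite p2 /= add1n ltnS -ltnNge.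
by move: H3a; rewrite p3 /= add1n ltnS -ltnNge.
Qed.

Lemma memF k n : k <= n ->
  [/\ v1 k \in Fset (hist n), v2 k \in Fset (hist n) & v3 k \in Fset (hist n)].
Proof.
by move=> Hk; split; apply/FsetP; exists k => //; rewrite !inE eqxx ?orbT.
Qed.

Lemma cross n m i j : n < m ->
  i \in [:: v1 n; v2 n; v3 n] -> j \in [:: v1 m; v2 m; v3 m] -> i <> j.
Proof.
case: m => // m; rewrite ltnS => Hnm Hi Hj E.
have Hin : i \in Fset (hist m) by apply/FsetP; exists n.
case: (newv m) => N1 N2 N3 _ _.
move: Hj; rewrite -E !inE => /or3P [] /eqP Ei; move: Hin; rewrite Ei.
- by rewrite (negbTE N1).
- by rewrite (negbTE N2).
- by rewrite (negbTE N3).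
Qed.

Arguments cross {n m i j}.

Lemma v1_inj : injective (fun n => v1 n.+1).
Proof.
move=> a b /= E; case: (ltngtP a b) => // H.
- by exfalso; apply: (@cross a.+1 b.+1 (v1 a.+1) (v1 b.+1) _ _ _ E);
     rewrite ?ltnS ?inE ?eqxx.
- by exfalso; apply: (@cross b.+1 a.+1 (v1 b.+1) (v1 a.+1) _ _ _ (esym E));
     rewrite ?ltnS ?inE ?eqxx.
Qed.

Theorem corollary2 :
  (forall n m : nat, 0 < n -> 0 < m ->
     [/\ v1 n <> v2 m, v1 n <> v3 m & v2 n <> v3 m]) /\
  (forall x : nat, 0 < x <->
     exists2 n : nat, 0 < n & [\/ x = v1 n, x = v2 n | x = v3 n]).
Proof.
split.
  move=> n m Hn Hm.
  case: (ltngtP n m) => H.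
  - by split; apply: cross H _ _; rewrite !inE eqxx ?orbT.
  - by split=> E; apply: (cross H _ _ (esym E)); rewrite !inE eqxx ?orbT.
  - move: Hm; rewrite -H => _; case: n Hn H => // n _ _; case: (newv n) => _ _ _ _ [l1 l2].
    split=> E; move: l1 l2; rewrite ?E ?ltnn //.
    by move=> l1 l2; move: (ltn_trans l1 l2); rewrite ltnn.
move=> x; split; last first.
  move=> [n]; case: n => // n _; case: (newv n) => _ _ _ p [l1 l2].
  case=> ->; [exact p | exact: ltn_trans p l1 |].
  exact: ltn_trans (ltn_trans p l1) l2.
move=> Hx.
case Hin: (x \in Fset (hist x.+1)).
  case/FsetP: Hin => k _ Hk; exists k.
    case: k Hk => // ; rewrite /v1 /v2 /v3 v0 /t1 /t2 /t3 /= !inE.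
    by rewrite !orbb => /eqP E; move: Hx; rewrite E.
  by move: Hk; rewrite !inE => /or3P [] /eqP ->; [apply: Or31|apply: Or32|apply: Or33].
exfalso.
have : size [seq v1 n.+1 | n <- iota 0 x.+2] <= size (iota 0 x.+1).
  apply: uniq_leq_size.
    by rewrite map_inj_uniq ?iota_uniq //; apply: v1_inj.
  move=> y /mapP [n]; rewrite mem_iota add0n => /andP [_ Hn] ->.
  rewrite mem_iota add0n ltnS.
  rewrite /v1 vS /step /t1 /=; apply: mex_le.
  apply/negP => H; move/negbT: Hin => /negP; apply.
  case/FsetP: H => k Hk Hy.
  by apply/FsetP; exists k => //; apply: leq_trans Hk _.
by rewrite size_map !size_iota ltnn.
Qed.
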